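(* Let $q$ be a prime power, let $\gamma$ be a primitive element of $\mathbb{F}_{q^2}$, and for any integer $a$ let $h_a(x)\in\mathbb{F}_q[x]$ be the minimal polynomial of $\gamma^{-a}$ over $\mathbb{F}_q$. For integers $e_1,e_2$ let $\mathcal{C}_{((q+1)e_1,e_2)}$ be the cyclic code of length $q^2-1$ over $\mathbb{F}_q$ with parity-check polynomial $h_{(q+1)e_1}(x)h_{e_2}(x)$. Let $\mathcal{N}$ be the number of distinct cyclic codes of the form $\mathcal{C}_{((q+1)e_1,e_2)}$, of length $q^2-1$ and dimension $3$, where $e_1,e_2$ range over all integers with $\gcd(q-1,2e_1-e_2)=1$ and $\gcd(q+1,e_2)=1$. Then $$\mathcal{N}=\frac{\phi(q^2-1)(q-1)}{2},$$ where $\phi$ is Euler's totient function. *)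

(* Defs.v *)
From HB Require Import structures.
From mathcomp Require Import all_boot all_order all_algebra.
Set Implicit Arguments. Unset Strict Implicit. Unset Printing Implicit Defensive.
Import Order.TTheory GRing.Theory Num.Theory.
Local Open Scope ring_scope.

Definition is_minpoly (F L : fieldType) (iota : {rmorphism F -> L})
    (x : L) (p : {poly F}) : Prop :=
  [/\ p \is monic, root (map_poly iota p) x &
      forall r : {poly F}, r != 0 -> root (map_poly iota r) x ->
        (size p <= size r)%N].

Definition poly_of_word (F : fieldType) (n : nat) (c : 'rV[F]_n) : {poly F} :=
  \sum_(i < n) (c ord0 i)%:P * 'X^i.

(* Cyclic code of length n over F with parity-check polynomial h:
   the ideal of F[x]/(x^n - 1) generated by g = (x^n - 1)/h. *)
Definition cyclic_code_chk (F : finFieldType) (n : nat) (h : {poly F})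
    : {set 'rV[F]_n} :=
  [set c | (('X^n - 1) %/ h) %| poly_of_word c].

(* Main.v *)
Require Import Defs.
From HB Require Import structures.
From mathcomp Require Import all_boot all_order all_algebra.
From mathcomp Require Import all_field zify ring.
Import Order.TTheory GRing.Theory Num.Theory.
Local Open Scope ring_scope.

Module Helpers.
Set Implicit Arguments. Unset Strict Implicit. Unset Printing Implicit Defensive.


Section Code.
Variables (F : finFieldType) (n : nat).

Definition wop (p : {poly F}) : 'rV[F]_n := \row_(i < n) p`_i.

Lemma coef_pow_ord (c : 'rV[F]_n) (i : 'I_n) : (poly_of_word c)`_i = c ord0 i.
Proof.
rewrite /poly_of_word coef_sum (bigD1 i) //= big1 => [|j ji].
  by rewrite coefCM coefXn eqxx mulr1 addr0.
by rewrite coefCM coefXn (inj_eq val_inj) eq_sym (negbTE ji) mulr0.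
Qed.

Lemma coef_pow_ge (c : 'rV[F]_n) k : (n <= k)%N -> (poly_of_word c)`_k = 0.
Proof.
move=> le; rewrite /poly_of_word coef_sum big1 // => j _.
rewrite coefCM coefXn; case: eqP => [e|]; last by rewrite mulr0.
by move: (ltn_ord j); rewrite -e ltnNge le.
Qed.

Lemma size_pow (c : 'rV[F]_n) : (size (poly_of_word c) <= n)%N.
Proof. by apply/leq_sizeP => k; apply: coef_pow_ge. Qed.

Lemma pow_wop (p : {poly F}) : (size p <= n)%N -> poly_of_word (wop p) = p.
Proof.
move=> sp; apply/polyP => k.
case: (ltnP k n) => [lt|le].
  by rewrite -[k]/(val (Ordinal lt)) coef_pow_ord mxE.
by rewrite coef_pow_ge // nth_default // (leq_trans sp le).
Qed.

Lemma wop_pow c : wop (poly_of_word c) = c.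
Proof.
apply/rowP => i; rewrite mxE coef_pow_ord.
by congr (c _ _); apply/val_inj; case: (ord0) => [[]].
Qed.

Lemma pow_inj : injective (@poly_of_word F n).
Proof. by move=> c d e; rewrite -(wop_pow c) -(wop_pow d) e. Qed.

End Code.
Arguments wop {F} n p.

Section Card.
Variables (F : finFieldType) (n : nat) (n_gt0 : (0 < n)%N).
Variables (h : {poly F}) (mh : h \is monic) (dh : h %| 'X^n - 1).
Let g : {poly F} := ('X^n - 1) %/ h.

Lemma gh : g * h = 'X^n - 1. Proof. exact: divpK. Qed.

Lemma monic_g : g \is monic.
Proof. by rewrite -(monicMr _ mh) gh -polyC1 monicXnsubC. Qed.

Lemma size_gh : (size g + size h = n.+2)%N.
Proof.
have g0 : g != 0 by apply: monic_neq0 monic_g.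
have h0 : h != 0 by apply: monic_neq0 mh.
have := size_Xn_sub_1 F n_gt0; rewrite -gh size_mul //.
have : (0 < size g)%N by rewrite size_poly_gt0.
have : (0 < size h)%N by rewrite size_poly_gt0.
move=> a b c; by rewrite -c prednK // addn_gt0 b.
Qed.

Lemma card_code : #|cyclic_code_chk n h| = (#|F| ^ (size h).-1)%N.
Proof.
set k := (size h).-1.
have g0 : g != 0 by apply: monic_neq0 monic_g.
have h0 : h != 0 by apply: monic_neq0 mh.
have sgh := size_gh.
have hs : (0 < size h)%N by rewrite size_poly_gt0.
pose phi (v : 'rV[F]_k) := wop n (g * poly_of_word v).
have szr : forall v : 'rV[F]_k, (size (g * poly_of_word v)%R <= n)%N.
  move=> v; apply: (leq_trans (size_polyMleq g _)).
  have := size_pow v; rewrite /k; set s := size (poly_of_word v); lia.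
have phi_inj : injective phi.
  move=> v w /(congr1 (@poly_of_word F n)); rewrite /phi !pow_wop //.
  by move/(mulfI g0)/pow_inj.
have -> : cyclic_code_chk n h = [set phi v | v in setT].
  apply/setP => c; rewrite inE; apply/idP/imsetP.
  - case/dvdpP => r er.
    have sr : (size r <= k)%N.
      have := size_pow c; rewrite er.
      have [->|r0] := eqVneq r 0; first by rewrite size_poly0.
      rewrite size_mul //; have : (0 < size r)%N by rewrite size_poly_gt0.
      rewrite /k; move: sgh; set a := size r; set b := size g; set d := size h; lia.
    exists (wop k r); first by rewrite inE.
    by rewrite /phi pow_wop // mulrC -er wop_pow.
  - case=> v _ ->; rewrite /phi pow_wop //; exact: dvdp_mulr (dvdpp g).
rewrite card_imset // cardsT card_mx mul1n //.
Qed.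

End Card.

Lemma code_inj (F : finFieldType) (n : nat) (n_gt0 : (0 < n)%N) (h1 h2 : {poly F}) :
  h1 \is monic -> h1 %| 'X^n - 1 -> (1 < size h1)%N ->
  h2 \is monic -> h2 %| 'X^n - 1 -> (1 < size h2)%N ->
  cyclic_code_chk n h1 = cyclic_code_chk n h2 -> h1 = h2.
Proof.
move=> m1 d1 s1 m2 d2 s2 e.
have key : forall a b : {poly F}, a \is monic -> a %| 'X^n - 1 -> (1 < size a)%N ->
    cyclic_code_chk n a = cyclic_code_chk n b -> (('X^n - 1) %/ b) %| (('X^n - 1) %/ a).
  move=> a b ma da sa eab.
  have sg := size_gh n_gt0 ma da.
  have : wop n (('X^n - 1) %/ a) \in cyclic_code_chk n a.
    by rewrite inE pow_wop //; lia.
  by rewrite eab inE pow_wop //; lia.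
have e12 := key _ _ m1 d1 s1 e.
have e21 := key _ _ m2 d2 s2 (esym e).
have eg : ('X^n - 1) %/ h1 = ('X^n - 1) %/ h2.
  apply/eqP; rewrite -eqp_monic ?(monic_g n_gt0) //.
  by rewrite /eqp e12 e21.
have E1 := gh d1; have E2 := gh d2; rewrite eg in E1.
apply: (mulfI (monic_neq0 (monic_g n_gt0 m2 d2))).
by rewrite E1 E2.
Qed.


Section Fld.
Variables (F L : finFieldType) (iota : {rmorphism F -> L}) (q : nat).
Hypotheses (hF : #|F| = q) (hL : #|L| = (q ^ 2)%N).

Lemma q_gt1 : (1 < q)%N. Proof. rewrite -hF; exact: finNzRing_gt1. Qed.

Lemma fixL (x : L) : x ^+ (q ^ 2) = x. Proof. by rewrite -hL expf_card. Qed.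

Lemma frob (x y : L) : (x + y) ^+ q = x ^+ q + y ^+ q.
Proof.
apply: exprDn_pchar.
have [p pr cp] := finPcharP F.
have cpL : p \in [pchar L] by rewrite (fmorph_pchar iota).
rewrite (eq_pnat _ (pcharf_eq cpL)).
have E : #|F| = (p ^ logn p #|F|)%N := card_pprimeChar cp.
by rewrite -hF E pnatX pnat_id.
Qed.

Lemma im_fixed (c : F) : iota c ^+ q = iota c.
Proof. by rewrite -rmorphXn -hF expf_card. Qed.

Lemma fixed_im (x : L) : x ^+ q = x -> exists c, x = iota c.
Proof.
move=> xq.
have E : map_poly iota ('X^#|F| - 'X) = \prod_(a <- map iota (enum F)) ('X - a%:P).
  rewrite finField_genPoly rmorph_prod big_map big_enum /=.
  by apply: eq_bigr => c _; rewrite rmorphB /= map_polyX map_polyC.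
have : root (map_poly iota ('X^#|F| - 'X)) x.
  by rewrite rmorphB /= map_polyXn map_polyX rootE !hornerE hF xq subrr.
by rewrite E root_prod_XsubC => /mapP [c _ ->]; exists c.
Qed.

Lemma mp_size (x : L) p : is_minpoly iota x p -> (1 < size p)%N.
Proof.
case=> mp rp _; rewrite ltnNge; apply/negP => sp.
have p0 : p != 0 := monic_neq0 mp.
have : (0 < size p)%N by rewrite size_poly_gt0.
move=> sp0.
have s1 : size p = 1%N by apply/eqP; rewrite eqn_leq sp sp0.
have l1 : p`_0 = 1 by move/monicP: mp; rewrite /lead_coef s1.
by move: rp; rewrite (size1_polyC sp) l1 map_polyC /= rmorph1 rootC oner_eq0.
Qed.

Lemma mp_eq (x : L) p r : is_minpoly iota x p -> r \is monic ->
  root (map_poly iota r) x -> (size r <= size p)%N -> p = r.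
Proof.
move=> hp mr rr srp; have [mp rp minp] := hp.
have r0 : r != 0 := monic_neq0 mr.
have spr := minp r r0 rr.
have esz : size r = size p by apply/eqP; rewrite eqn_leq srp spr.
apply/eqP; apply/negPn/negP => npr.
have d0 : p - r != 0 by rewrite subr_eq0.
have := minp _ d0.
rewrite rmorphB rootE hornerD hornerN (rootP rp) (rootP rr) subrr eqxx.
move=> /(_ isT); apply/negP; rewrite -ltnNge.
have sp := mp_size hp.
rewrite -[size p]prednK ?(ltnW sp) // ltnS; apply/leq_sizeP => j hj.
rewrite coefB; case: (eqVneq j (size p).-1) => [->|ne].
  have lr : lead_coef r = 1 := monicP mr.
  rewrite /lead_coef esz in lr.
  have lp : p`_(size p).-1 = 1 by exact: monicP mp.
  by rewrite lr lp subrr.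
have hj' : (size p <= j)%N.
  by move: hj; rewrite leq_eqVlt eq_sym (negbTE ne) /= prednK // (ltnW sp).
have hr : (size r <= j)%N by rewrite esz.
by rewrite (nth_default _ hj') (nth_default _ hr) subrr.
Qed.

Lemma mp_uniq (x : L) p p' : is_minpoly iota x p -> is_minpoly iota x p' -> p = p'.
Proof.
move=> hp hp'; have [mp' rp' _] := hp'; have [mp _ minp] := hp.
apply: (mp_eq hp) => //; have [_ _ minp'] := hp'.
exact: minp' _ (monic_neq0 mp) (let: And3 _ r _ := hp in r).
Qed.

Lemma mp_lin (c : F) p : is_minpoly iota (iota c) p -> p = 'X - c%:P.
Proof.
move=> hp; apply: (mp_eq hp); first by rewrite monicXsubC.
  by rewrite rmorphB /= map_polyX map_polyC root_XsubC.
by rewrite size_XsubC; exact: mp_size hp.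
Qed.

Lemma mp_quad (y : L) p : y ^+ q != y -> is_minpoly iota y p ->
  map_poly iota p = ('X - y%:P) * ('X - (y ^+ q)%:P).
Proof.
move=> ny hp.
have [s es] : exists s, y + y ^+ q = iota s.
  by apply: fixed_im; rewrite frob -exprM mulnn fixL addrC.
have [t et] : exists t, y * y ^+ q = iota t.
  by apply: fixed_im; rewrite exprMn -exprM mulnn fixL mulrC.
pose r := 'X^2 - s%:P * 'X + t%:P.
have mr : map_poly iota r = ('X - y%:P) * ('X - (y ^+ q)%:P).
  rewrite /r rmorphD rmorphB rmorphXn rmorphM /= map_polyX !map_polyC /=.
  rewrite -es -et polyCD polyCM; ring.
have monr : r \is monic by rewrite -(map_monic iota) mr rpredM ?monicXsubC.
have rr : root (map_poly iota r) y by rewrite mr rootM root_XsubC eqxx.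
have sr : size r = 3%N.
  by rewrite -(size_map_poly iota) mr size_mul ?polyXsubC_eq0 // !size_XsubC.
suff sp : (2 < size p)%N by rewrite (mp_eq hp monr rr) ?sr.
have [mp rp _] := hp.
have := mp_size hp; rewrite leq_eqVlt => /orP[/eqP s2|//]; exfalso.
move/factor_theorem: rp => [p1 ep1].
have smap : size (map_poly iota p) = 2%N by rewrite size_map_poly.
have p10 : p1 != 0 by apply: contra_eq_neq ep1 => ->; rewrite mul0r -size_poly_eq0 smap.
have sp1 : size p1 = 1%N.
  move: smap; rewrite ep1 size_mul ?polyXsubC_eq0 // size_XsubC addn2 /=.
  by case.
have lp1 : lead_coef p1 = 1.
  have mmap : map_poly iota p \is monic by rewrite map_monic.
  move/monicP: mmap.
  by rewrite ep1 lead_coefM lead_coefXsubC mulr1.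
have ep1' : p1 = 1.
  rewrite (size1_polyC (eq_leq sp1)); move: lp1; rewrite /lead_coef sp1 /= => ->.
  by [].
have c0 : (map_poly iota p)`_0 = (p1 * ('X - y%:P))`_0 by rewrite ep1.
rewrite /= ep1' mul1r coef_map /= coefB coefX coefC /= sub0r in c0.
move/negP: ny; apply; apply/eqP.
have -> : y = iota (- p`_0) by rewrite rmorphN c0 opprK.
exact: im_fixed.
Qed.

End Fld.


Section Main.
Variables (F L : finFieldType) (iota : {rmorphism F -> L}) (q : nat).
Hypotheses (hF : #|F| = q) (hL : #|L| = (q ^ 2)%N).
Variables (gamma : L) (hgamma : (q ^ 2 - 1)%N.-primitive_root gamma).
Variables (h : int -> {poly F}).
Hypothesis (hh : forall a : int, is_minpoly iota (gamma ^ (- a)) (h a)).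

Let n := (q ^ 2 - 1)%N.
Let q1 := q_gt1 hF.
Lemma n_eq : n = ((q - 1) * (q + 1))%N.
Proof. by rewrite /n -subn_sqr. Qed.
Lemma n_gt0 : (0 < n)%N.
Proof. rewrite n_eq; have := q1; lia. Qed.
Lemma qn : (q - 1 < n)%N.
Proof. rewrite n_eq; have := q1; nia. Qed.

Definition Y (k : nat) := (gamma ^+ k)^-1.

Lemma hY (k : nat) : gamma ^ (- k%:Z) = Y k.
Proof. by rewrite /Y -exprnN. Qed.

Lemma YqE k : Y k ^+ q = Y (k * q).
Proof. by rewrite /Y exprVn exprM. Qed.

Lemma Yeq a b : (Y a == Y b) = (a == b %[mod n]).
Proof. by rewrite /Y (inj_eq invr_inj) (eq_prim_root_expr hgamma). Qed.

Lemma Yn k : Y k ^+ n = 1.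
Proof. by rewrite /Y exprVn -exprM mulnC exprM (prim_expr_order hgamma) expr1n invr1. Qed.

Lemma gamma0 : gamma != 0.
Proof.
apply/eqP => g0; have := prim_expr_order hgamma.
rewrite g0 expr0n; have := n_gt0; rewrite /n; case: (q ^ 2 - 1)%N => // m _ /eqP.
by rewrite eq_sym oner_eq0.
Qed.

Lemma hmod (A B k : int) : A - B = k * n%:Z -> h A = h B.
Proof.
move=> e; apply: (mp_uniq (hh A)).
have -> : gamma ^ (- A) = gamma ^ (- B) => //.
rewrite -!invr_expz; congr (_^-1).
have -> : A = B + n%:Z * k by rewrite mulrC -e; ring.
have gn : gamma ^ n%:Z = 1 := prim_expr_order hgamma.
by rewrite expfzDr ?gamma0 // -exprz_exp gn exp1rz mulr1.
Qed.

Definition Ae (e : nat) := ((q + 1) * e)%N.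
Definition Be (e u : nat) := (u + (q + 1) * e)%N.
Definition Hp e u := h (Ae e)%:Z * h (Be e u)%:Z.

Lemma Ae_mod e : (Ae e * q == Ae e %[mod n]).
Proof.
apply/eqP; have -> : (Ae e * q = e * n + Ae e)%N by rewrite n_eq /Ae; have := q1; nia.
by rewrite modnMDl.
Qed.

Lemma fixA e : Y (Ae e) ^+ q = Y (Ae e).
Proof. by rewrite YqE; apply/eqP; rewrite Yeq Ae_mod. Qed.

Lemma hA e : exists c, Y (Ae e) = iota c /\ h (Ae e)%:Z = 'X - c%:P.
Proof.
have [c ec] := fixed_im iota hF (fixA e); exists c; split => //.
by have := hh (Ae e)%:Z; rewrite hY ec; exact: mp_lin.
Qed.

Lemma Bnfix e u : coprime u n -> Y (Be e u) ^+ q != Y (Be e u).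
Proof.
move=> cu; rewrite YqE Yeq; apply/negP.
rewrite eqn_mod_dvd; last by rewrite leq_pmulr // ltnW.
rewrite -{2}(muln1 (Be e u)) -mulnBr.
have -> : (Be e u * (q - 1) = u * (q - 1) + e * n)%N by rewrite /Be n_eq; nia.
rewrite dvdn_addl; last exact: dvdn_mull (dvdnn n).
rewrite Gauss_dvdr; last by rewrite coprime_sym.
move/(dvdn_leq); rewrite subn_gt0 => /(_ q1); rewrite leqNgt qn.
by [].
Qed.

Lemma hB e u : coprime u n -> map_poly iota (h (Be e u)%:Z) =
  ('X - (Y (Be e u))%:P) * ('X - (Y (Be e u) ^+ q)%:P).
Proof.
move=> cu; have := hh (Be e u)%:Z; rewrite hY.
move=> hp; exact: (mp_quad hF hL (Bnfix e cu) hp).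
Qed.

Lemma mapHp e u : coprime u n -> map_poly iota (Hp e u) =
  \prod_(z <- [:: Y (Ae e); Y (Be e u); Y (Be e u) ^+ q]) ('X - z%:P).
Proof.
move=> cu; rewrite rmorphM /= (hB e cu); have [c [ec ->]] := hA e.
by rewrite map_polyXsubC -ec !big_cons big_nil mulr1.
Qed.

Lemma monicHp e u : Hp e u \is monic.
Proof.
by rewrite rpredM // ?(let: And3 m _ _ := hh _ in m).
Qed.

Lemma sizeHp e u : coprime u n -> size (Hp e u) = 4%N.
Proof. by move=> cu; rewrite -(size_map_poly iota) (mapHp e cu) size_prod_XsubC. Qed.

Lemma yqq (y : L) : (y ^+ q) ^+ q = y.
Proof. by rewrite -exprM mulnn (fixL hL y). Qed.

Lemma dvdHp e u : coprime u n -> Hp e u %| 'X^n - 1.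
Proof.
move=> cu; rewrite -(dvdp_map iota) rmorphB /= map_polyXn rmorph1 (mapHp e cu).
have nf := Bnfix e cu; have fx := fixA e.
apply: uniq_roots_dvdp.
  apply/allP => z; rewrite !inE => /or3P[]/eqP->; rewrite rootE !hornerE ?Yn ?subrr //.
  by rewrite -exprM mulnC exprM Yn expr1n subrr.
rewrite uniq_rootsE /= !inE !negb_or !andbT; apply/andP; split; [apply/andP; split|].
- by apply: contra nf => /eqP <-; rewrite fx.
- by apply: contra nf => /eqP e1; rewrite -{2}(yqq (Y (Be e u))) -e1 fx e1.
- by rewrite eq_sym.
Qed.

Lemma cardHp e u : coprime u n -> #|cyclic_code_chk n (Hp e u)| = (q ^ 3)%N.
Proof.
move=> cu; rewrite card_code ?n_gt0 ?monicHp ?dvdHp // (sizeHp e cu) hF //.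
Qed.

Lemma roots_Hp e u z : coprime u n -> root (map_poly iota (Hp e u)) z =
  [|| z == Y (Ae e), z == Y (Be e u) | z == Y (Be e u) ^+ q].
Proof. by move=> cu; rewrite (mapHp e cu) root_prod_XsubC !inE. Qed.

Lemma Ae_lt e : (e < q - 1)%N -> (Ae e < n)%N.
Proof. by rewrite n_eq /Ae => lt; have := q1; nia. Qed.

Lemma f_eq e u e' u' : coprime u n -> coprime u' n -> (e < q - 1)%N -> (e' < q - 1)%N ->
  (u < n)%N -> (u' < n)%N ->
  cyclic_code_chk n (Hp e u) = cyclic_code_chk n (Hp e' u') ->
  e' = e /\ (u' = u \/ u' = ((u * q) %% n)%N).
Proof.
move=> cu cu' le le' lu lu' E.
have EH : Hp e u = Hp e' u'.
  by apply: (code_inj n_gt0 (monicHp e u) (dvdHp e cu) _ (monicHp e' u') (dvdHp e' cu') _ E);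
    rewrite ?(sizeHp e cu) ?(sizeHp e' cu').
have R z : root (map_poly iota (Hp e' u')) z = root (map_poly iota (Hp e u)) z by rewrite EH.
have hx : root (map_poly iota (Hp e u)) (Y (Ae e')) by rewrite -R (roots_Hp _ _ cu') eqxx.
have hy : root (map_poly iota (Hp e u)) (Y (Be e' u')) by rewrite -R (roots_Hp _ _ cu') eqxx orbT.
rewrite (roots_Hp _ _ cu) in hx; rewrite (roots_Hp _ _ cu) in hy.
have nf := Bnfix e cu; have nf' := Bnfix e' cu'; have fx := fixA e'.
have ee : e' = e.
  case/or3P: hx => [/eqP ex|/eqP ex|/eqP ex].
  - have : Y (Ae e') == Y (Ae e) by rewrite ex.
    by rewrite Yeq !modn_small ?Ae_lt // /Ae eqn_pmul2l ?addn_gt0 ?orbT // => /eqP.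
  - by move: nf; rewrite -ex fx eqxx.
  - by move: nf; rewrite -{2}(yqq (Y (Be e u))) -ex fx ex eqxx.
subst e'; split => //.
case/or3P: hy => [/eqP ey|/eqP ey|/eqP ey].
- by move: nf'; rewrite ey fixA eqxx.
- left; move/eqP: ey; rewrite Yeq /Be eqn_modDr !modn_small // => /eqP //.
- right; move/eqP: ey; rewrite YqE Yeq.
  have -> : (Be e u * q = e * n + (u * q + Ae e))%N by rewrite /Be /Ae n_eq; have := q1; nia.
  move/eqP; rewrite modnMDl /Be -/(Ae e) => /eqP; rewrite eqn_modDr (modn_small lu') => /eqP //.
Qed.

Lemma cop_q : coprime q n.
Proof.
rewrite n_eq coprimeMr; apply/andP; split.
  have {1}-> : q = (q - 1).+1 by have := q1; lia.
  exact: coprimeSn.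
by rewrite addn1 coprimenS.
Qed.

Lemma cop_uq u : coprime u n -> coprime ((u * q) %% n) n.
Proof. by move=> cu; rewrite coprime_modl coprimeMl cu cop_q. Qed.

Lemma Yuq (e u : nat) : Y (Be e ((u * q) %% n)) = Y (Be e u) ^+ q.
Proof.
apply/eqP; rewrite YqE Yeq.
have -> : (Be e u * q = e * n + (u * q + Ae e))%N by rewrite /Be /Ae n_eq; have := q1; nia.
by rewrite modnMDl /Be -/(Ae e) modnDml.
Qed.

Lemma Hp_q (e u : nat) : coprime u n -> Hp e ((u * q) %% n) = Hp e u.
Proof.
move=> cu; rewrite /Hp; congr (_ * _); apply: (map_poly_inj iota).
by rewrite (hB e (cop_uq cu)) (hB e cu) Yuq yqq mulrC.
Qed.

Lemma uq_neq (e u : nat) : coprime u n -> u != ((u * q) %% n)%N.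
Proof.
move=> cu; apply/eqP => eu; have := Bnfix e cu.
by rewrite -Yuq -eu eqxx.
Qed.

Definition P := setX [set: 'I_(q - 1)] [set u : 'I_n | coprime u n].
Definition f (p : 'I_(q - 1) * 'I_n) := cyclic_code_chk n (Hp p.1 p.2).
Definition uqo (u : 'I_n) : 'I_n := Ordinal (ltn_pmod (u * q) n_gt0).

Lemma fiber p : p \in P -> [set p' in P | f p' == f p] = [set p; (p.1, uqo p.2)].
Proof.
case: p => e u; rewrite /P in_setX !inE /= => cu.
apply/setP => [[e' u']]; rewrite !(inE, in_setX) /=.
apply/idP/idP.
- case/andP => cu' /eqP E.
  have [ee [eu|eu]] := f_eq cu cu' (ltn_ord e) (ltn_ord e') (ltn_ord u) (ltn_ord u') (esym E).
  + by rewrite !xpair_eqE -!val_eqE /= ee eu !eqxx.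
  + by rewrite !xpair_eqE -!val_eqE /= ee eu !eqxx orbT.
- move=> /orP[/eqP [-> ->]|/eqP [-> ->]]; first by rewrite cu eqxx.
  by rewrite /= (cop_uq cu) /f /= (Hp_q e cu) eqxx.
Qed.

Lemma fiber2 p : p \in P -> #|[set p' in P | f p' == f p]| = 2%N.
Proof.
move=> pP; rewrite fiber // cards2.
case: p pP => e u; rewrite /P in_setX !inE /= => cu.
by rewrite xpair_eqE -val_eqE /= eqxx (uq_neq e cu).
Qed.

Lemma cardP : #|P| = ((q - 1) * totient n)%N.
Proof.
rewrite cardsX cardsT card_ord; congr (_ * _)%N.
rewrite totient_count_coprime big_mkord -sum1_card big_mkcond /=.
by apply: eq_bigr => i _; rewrite inE coprime_sym; case: coprime.
Qed.

Lemma cardS : (#|f @: P| * 2 = (q - 1) * totient n)%N.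
Proof.
rewrite -cardP -[#|P|]sum1_card (partition_big_imset f) /= -sum_nat_const.
apply: eq_bigr => C /imsetP [p pP ->].
rewrite -(fiber2 pP) -sum1_card; apply: eq_bigl => p'.
by rewrite inE.
Qed.

Lemma main : exists S : {set {set 'rV[F]_(q ^ 2 - 1)}},
    (forall C : {set 'rV[F]_(q ^ 2 - 1)},
       C \in S <->
       exists e1 e2 : int,
         [/\ gcdz (q - 1)%:Z (2 * e1 - e2) = 1,
             gcdz (q + 1)%:Z e2 = 1,
             C = cyclic_code_chk (q ^ 2 - 1) (h ((q + 1)%:Z * e1) * h e2)
           & #|C| = (q ^ 3)%N]) /\
    (#|S| * 2 = totient (q ^ 2 - 1) * (q - 1))%N.
Proof.
exists (f @: P); split; last by rewrite cardS mulnC.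
have nZ : n%:Z = (q - 1)%:Z * (q + 1)%:Z by rewrite n_eq PoszM.
move=> C; split.
- case/imsetP => [[[e le] [u lu]]]; rewrite /P in_setX !inE /= => cu ->.
  have cu1 : coprime u (q - 1) by move: cu; rewrite n_eq coprimeMr => /andP[].
  have cu2 : coprime u (q + 1) by move: cu; rewrite n_eq coprimeMr => /andP[].
  exists e%:Z, (Be e u)%:Z; split.
  + have -> : 2 * e%:Z - (Be e u)%:Z = (- e%:Z) * (q - 1)%:Z + - (u%:Z).
      rewrite /Be; have := q1; nia.
    rewrite gcdzMDl gcdzN /gcdz /=.
    by move: cu1; rewrite coprime_sym => /eqP ->.
  + have -> : (Be e u)%:Z = e%:Z * (q + 1)%:Z + u%:Z by rewrite /Be; lia.
    rewrite gcdzMDl /gcdz /=.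
    by move: cu2; rewrite coprime_sym => /eqP ->.
  + by rewrite /f /Hp /Ae PoszM.
  + exact: cardHp.
- case=> E1 [E2 [g1 g2 -> _]].
  have qz : (0 < (q - 1)%:Z) by rewrite ltz_nat subn_gt0 q1.
  have nz : (0 < n%:Z) by rewrite ltz_nat n_gt0.
  pose e := `|(E1 %% (q - 1)%:Z)%Z|%N.
  pose X := E2 - (q + 1)%:Z * E1.
  pose u := `|(X %% n%:Z)%Z|%N.
  have he : e%:Z = (E1 %% (q - 1)%:Z)%Z by rewrite gez0_abs // modz_ge0 // gt_eqF.
  have hu : u%:Z = (X %% n%:Z)%Z by rewrite gez0_abs // modz_ge0 // gt_eqF.
  have elt : (e < q - 1)%N by rewrite -ltz_nat he ltz_pmod.
  have ult : (u < n)%N by rewrite -ltz_nat hu ltz_pmod.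
  have [k E1e] : exists k, E1 = k * (q - 1)%:Z + e%:Z by exists (E1 %/ (q - 1)%:Z)%Z; rewrite he -divz_eq.
  have [j Xe] : exists j, X = j * n%:Z + u%:Z by exists (X %/ n%:Z)%Z; rewrite hu -divz_eq.
  have cu : coprime u n.
    have : gcdz n%:Z u%:Z = 1.
      rewrite hu gcdz_modr.
      apply/eqP; rewrite -/(coprimez _ _) nZ coprimezMl; apply/andP; split.
        have -> : X = (- E1) * (q - 1)%:Z + - (2 * E1 - E2).
          rewrite /X; have := q1; nia.
        by rewrite /coprimez gcdzMDl gcdzN g1.
      have -> : X = (- E1) * (q + 1)%:Z + E2 by rewrite /X; ring.
      by rewrite /coprimez gcdzMDl g2.
    rewrite /gcdz /= => -[g]; by rewrite coprime_sym /coprime g.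
  apply/imsetP; exists (Ordinal elt, Ordinal ult).
    by rewrite /P in_setX !inE.
  rewrite /f /Hp /=; congr (cyclic_code_chk _ (_ * _)).
  + apply: (hmod (k := k)).
    rewrite /Ae PoszM E1e nZ; ring.
  + apply: (hmod (k := j + k)).
    have E2e : E2 = X + (q + 1)%:Z * E1 by rewrite /X; ring.
    rewrite E2e Xe E1e nZ /Be !PoszD !PoszM; ring.
Qed.

End Main.

End Helpers.

Theorem theorem4 (F L : finFieldType) (iota : {rmorphism F -> L}) (q : nat)
    (hF : #|F| = q) (hL : #|L| = (q ^ 2)%N)
    (gamma : L) (hgamma : (q ^ 2 - 1)%N.-primitive_root gamma)
    (h : int -> {poly F})
    (hh : forall a : int, is_minpoly iota (gamma ^ (- a)) (h a)) :
  exists S : {set {set 'rV[F]_(q ^ 2 - 1)}},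
    (forall C : {set 'rV[F]_(q ^ 2 - 1)},
       C \in S <->
       exists e1 e2 : int,
         [/\ gcdz (q - 1)%:Z (2 * e1 - e2) = 1,
             gcdz (q + 1)%:Z e2 = 1,
             C = cyclic_code_chk (q ^ 2 - 1) (h ((q + 1)%:Z * e1) * h e2)
           & #|C| = (q ^ 3)%N]) /\
    (#|S| * 2 = totient (q ^ 2 - 1) * (q - 1))%N.
Proof. exact: (Helpers.main hF hL hgamma hh). Qed.
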